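(* Let $r\ge2$, $d=r-1$, and let $s_1,\dots,s_r$ be independent indeterminates over $\mathbb{Q}$, $s_0=1$, $s_i=0$ for $i<0$ or $i>r$, $f(x)=x^r+s_1x^{r-1}+\cdots+s_r$. Define $d\times d$ matrices $X_1,X_2,X_3,X_4$ by: $(X_1)_{i,j}=(j-i)s_{r-(j-i)}$ if $j\ge i$ and $0$ otherwise; $(X_2)_{i,j}=s_{i-j}$; $(X_3)_{i,j}=s_{r-(j-i)}$ if $j\ge i$ and $0$ otherwise; $(X_4)_{i,j}=(r-(i-j))s_{i-j}$ if $i\ge j$ and $0$ otherwise. Let $u$ be the column vector with $i$-th entry $(r-i)s_i$ and $w$ the row vector with $j$-th entry $(r-j)s_{r-j}$ ($1\le i,j\le d$). Then \[ -X_1X_2+X_3X_4-\frac1r\,u\,w=J\,\mathrm{Bez}\Bigl(f'(x),\,f(x)-\tfrac1r xf'(x)\Bigr), \] where $J$ is the $d\times d$ matrix with ones on the antidiagonal and zeros elsewhere.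
   Context: For polynomials $F,G$ with $D=\max(\deg F,\deg G)$, the Bézout matrix $\mathrm{Bez}(F,G)$ is the $D\times D$ matrix defined by $\frac{F(x)G(y)-F(y)G(x)}{x-y}=(1,x,\ldots,x^{D-1})\,\mathrm{Bez}(F,G)\,(1,y,\ldots,y^{D-1})^T$. Here $f'(x)$ has degree $r-1$ and $f(x)-\frac1r xf'(x)$ has degree at most $r-1$, so the Bézout matrix is $(r-1)\times(r-1)$. *)

(* Defs.v *)
From HB Require Import structures.
From mathcomp Require Import all_boot all_order all_algebra.
From mathcomp Require Import mpoly.
Set Implicit Arguments. Unset Strict Implicit. Unset Printing Implicit Defensive.
Import GRing.Theory.
Local Open Scope ring_scope.

(* Bezout matrix of F, G (n x n, intended n = max(deg F, deg G)):
   (F(x)G(y) - F(y)G(x)) / (x - y) = sum_{i,j<n} B_ij x^i y^j.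
   Bivariate polynomials are {poly {poly R}}: outer variable x, inner y.
   The division is exact; it is computed by pseudo-division by the monic
   (in x) polynomial x - y. *)
Definition bezout_quot (R : comNzRingType) (F G : {poly R}) : {poly {poly R}} :=
  Pdiv.Ring.rdivp (F^:P * G%:P - G^:P * F%:P) ('X - ('X)%:P).

Definition bezout (R : comNzRingType) (n : nat) (F G : {poly R}) : 'M[R]_n :=
  \matrix_(i < n, j < n) ((bezout_quot F G)`_i)`_j.

Definition sgen (r : nat) (k : int) : {mpoly rat[r]} :=
  match k with
  | Posz 0 => 1
  | Posz k' => oapp (fun i : 'I_r => 'X_i) 0 (insub k'.-1)
  | Negz _ => 0
  end.

Definition fgen (r : nat) : {poly {mpoly rat[r]}} :=
  \sum_(k < r.+1) (sgen r k)%:P * 'X^(r - k).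

Definition ggen (r : nat) : {poly {mpoly rat[r]}} :=
  fgen r - ((r%:R^-1 : rat)%:MP)%:P * ('X * (fgen r)^`()).

(* Matrices of the statement; the paper's indices 1..d correspond to the
   ordinals 0..d-1 (i = i0+1, j = j0+1); differences j-i are unchanged. *)
Definition X1 (r : nat) : 'M[{mpoly rat[r]}]_(r.-1) :=
  \matrix_(i, j) (if (i <= j)%N then
                    ((j - i)%N%:R * sgen r (r%:Z - (j - i)%N%:Z)) else 0).
Definition X2 (r : nat) : 'M[{mpoly rat[r]}]_(r.-1) :=
  \matrix_(i, j) sgen r (i%:Z - j%:Z).
Definition X3 (r : nat) : 'M[{mpoly rat[r]}]_(r.-1) :=
  \matrix_(i, j) (if (i <= j)%N then sgen r (r%:Z - (j - i)%N%:Z) else 0).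
Definition X4 (r : nat) : 'M[{mpoly rat[r]}]_(r.-1) :=
  \matrix_(i, j) (if (j <= i)%N then
                    ((r - (i - j))%N%:R * sgen r (i%:Z - j%:Z)) else 0).
Definition ucol (r : nat) : 'cV[{mpoly rat[r]}]_(r.-1) :=
  \col_i ((r - i.+1)%N%:R * sgen r (i.+1)%:Z).
Definition wrow (r : nat) : 'rV[{mpoly rat[r]}]_(r.-1) :=
  \row_j ((r - j.+1)%N%:R * sgen r (r%:Z - (j.+1)%:Z)).
Definition Janti (R : nzRingType) (n : nat) : 'M[R]_n :=
  \matrix_(i, j) (if (i + j == n.-1)%N then 1 else 0).

(* Main.v *)
Require Import Defs.
From HB Require Import structures.
From mathcomp Require Import all_boot all_order all_algebra.
From mathcomp Require Import mpoly.
From mathcomp Require Import ring zify.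
Import GRing.Theory Num.Theory.
Local Open Scope ring_scope.

Lemma sgen_neg r (k : int) : (k < 0)%R -> sgen r k = 0.
Proof. by case: k. Qed.

Lemma sgen_big r (k : int) : (r%:Z < k)%R -> sgen r k = 0.
Proof.
case: k => // -[|k] //= hk.
by rewrite insubF //= ltnNge -ltnS; apply/negbTE; rewrite negbK -ltz_nat.
Qed.

Lemma sgen0 r : sgen r 0 = 1. Proof. by []. Qed.

Lemma fgen_coef r m : (fgen r)`_m = sgen r (r%:Z - m%:Z).
Proof.
have -> : fgen r = \poly_(i < r.+1) sgen r (r%:Z - i%:Z).
  rewrite /fgen poly_def (reindex_inj rev_ord_inj).
  apply: eq_bigr => i _; rewrite -mul_polyC.
  have hi := ltn_ord i.
  congr ((sgen r _)%:P * 'X^_); rewrite /=; lia.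
rewrite coef_poly; case: ltnP => // hm.
rewrite sgen_neg //; lia.
Qed.

Lemma fder_coef r m : ((fgen r)^`())`_m = sgen r (r%:Z - m.+1%:Z) *+ m.+1.
Proof. by rewrite coef_deriv fgen_coef. Qed.

Lemma ggen_coef r m : (ggen r)`_m =
  sgen r (r%:Z - m%:Z) - ((r%:R^-1 : rat)%:MP) * (sgen r (r%:Z - m%:Z) *+ m).
Proof.
rewrite /ggen coefB coefCM coefXM fgen_coef; case: m => [|m] //=.
by rewrite fder_coef.
Qed.

Lemma bezout_quotE (R : comNzRingType) (F G : {poly R}) Q :
  Q * ('X - ('X)%:P) = F^:P * G%:P - G^:P * F%:P -> bezout_quot F G = Q.
Proof. by rewrite /bezout_quot => <-; apply: Pdiv.RingMonic.rdivp_mull; apply: monicXsubC. Qed.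

Lemma coef2_prod (R : comNzRingType) (F G : {poly R}) I J :
  ((F^:P * G%:P)`_I)`_J = F`_I * G`_J.
Proof. by rewrite coefMC coef_map /= coefCM. Qed.

Lemma coef2_lin (R : comNzRingType) (Q : {poly {poly R}}) I J :
  ((Q * ('X - ('X)%:P))`_I)`_J =
  (if I is I'.+1 then (Q`_I')`_J else 0) - (if J is J'.+1 then (Q`_I)`_J' else 0).
Proof.
rewrite mulrBr coefB coefMX coefMC coefB coefMX.
by case: I => [|I] /=; case: J => [|J] //=; rewrite ?coef0 ?sub0r ?subr0.
Qed.

Definition cc n : {mpoly rat[n.+2]} := (((n.+2)%:R^-1 : rat)%:MP).
Definition x1 n (i j : nat) : {mpoly rat[n.+2]} :=
  if (i <= j)%N then ((j - i)%N%:R * sgen n.+2 ((n.+2)%:Z - (j - i)%N%:Z)) else 0.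
Definition x2 n (i j : nat) : {mpoly rat[n.+2]} := sgen n.+2 (i%:Z - j%:Z).
Definition x3 n (i j : nat) : {mpoly rat[n.+2]} :=
  if (i <= j)%N then sgen n.+2 ((n.+2)%:Z - (j - i)%N%:Z) else 0.
Definition x4 n (i j : nat) : {mpoly rat[n.+2]} :=
  if (j <= i)%N then ((n.+2 - (i - j))%N%:R * sgen n.+2 (i%:Z - j%:Z)) else 0.
Definition uu n (i : nat) : {mpoly rat[n.+2]} :=
  (n.+2 - i.+1)%N%:R * sgen n.+2 (i.+1)%:Z.
Definition ww n (j : nat) : {mpoly rat[n.+2]} :=
  (n.+2 - j.+1)%N%:R * sgen n.+2 ((n.+2)%:Z - (j.+1)%:Z).
Definition term n i k j := - (x1 n i k * x2 n k j) + x3 n i k * x4 n k j.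
Definition PP n i j := \sum_(k < n.+1) term n i k j - cc n * (uu n i * ww n j).

Lemma lhs_entry n (i j : 'I_n.+1) :
  (- (X1 n.+2 *m X2 n.+2) + X3 n.+2 *m X4 n.+2
    - (((n.+2)%:R^-1 : rat)%:MP) *: (ucol n.+2 *m wrow n.+2)) i j = PP n i j.
Proof.
rewrite !mxE big_ord1 !mxE /PP /term -sumrN -big_split /=.
by congr (_ - _); apply: eq_bigr => k _; rewrite !mxE.
Qed.

Lemma PP_row_big n i j : (n.+1 <= i)%N -> PP n i j = 0.
Proof.
move=> hi; rewrite /PP big1 ?sub0r.
  by rewrite /uu (_ : (n.+2 - i.+1 = 0)%N) ?mul0r ?mulr0 ?oppr0 //; lia.
move=> k _; have hk := ltn_ord k.
rewrite /term /x1 /x3 (_ : (i <= k)%N = false) ?mul0r ?oppr0 ?add0r //.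
by apply/negbTE; rewrite -ltnNge; lia.
Qed.

Lemma PP_col_big n i j : (n.+1 <= j)%N -> PP n i j = 0.
Proof.
move=> hj; rewrite /PP big1 ?sub0r.
  by rewrite /ww (_ : (n.+2 - j.+1 = 0)%N) ?mul0r ?mulr0 ?oppr0 //; lia.
move=> k _; have hk := ltn_ord k.
rewrite /term /x2 /x4 (_ : (j <= k)%N = false) ?sgen_neg ?mulr0 ?oppr0 ?add0r //; first lia.
by apply/negbTE; rewrite -ltnNge; lia.
Qed.

Lemma PP_disp n i j : PP n i.+1 j.+1 - PP n i j =
  - term n i n j - cc n * (uu n i.+1 * ww n j.+1 - uu n i * ww n j).
Proof.
rewrite /PP big_ord_recl big_ord_recr /=.
have -> : term n i.+1 0 j.+1 = 0 by rewrite /term /x1 /x3 /= !mul0r oppr0 add0r.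
have -> : \sum_(k < n) term n i.+1 (bump 0 k) j.+1 = \sum_(k < n) term n i k j.
  apply: eq_bigr => k _; rewrite /term /x1 /x2 /x3 /x4 /bump /= !add1n !subSS !ltnS.
  have E : forall a b : nat, ((a.+1)%:Z - (b.+1)%:Z = a%:Z - b%:Z)%R by move=> a b; lia.
  by rewrite E.
ring.
Qed.

Lemma elim_cc (A : comNzRingType) (r : A) (L R : A -> A) :
  (forall x, L x - R x = (L 0 - R 0) + x * ((L 1 - R 1) - (L 0 - R 0))) ->
  r * (L 0 - R 0) + ((L 1 - R 1) - (L 0 - R 0)) = 0 ->
  forall c, c * r = 1 -> L c = R c.
Proof.
move=> hL h0 c hc; apply/eqP; rewrite -subr_eq0 hL.
move: h0; set p := L 0 - R 0; set q := _ - p => h0.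
have -> : q = - (r * p) by apply/eqP; rewrite -subr_eq0 opprK addrC h0.
by rewrite mulrN mulrA hc mul1r subrr.
Qed.

Lemma cc_r n : cc n * (n.+2)%:R = 1.
Proof.
rewrite /cc -mpolyC_nat -mpolyCM (_ : ((n.+2)%:R^-1 * (n.+2)%:R : rat) = 1) ?mpolyC1 //.
by apply: mulVf; rewrite pnatr_eq0.
Qed.

Lemma half_cancel m (x : {mpoly rat[m]}) : x + x = 0 -> x = 0.
Proof.
move=> h; have e : ((2^-1 : rat) * 2%:R) = 1 by apply: mulVf; rewrite pnatr_eq0.
have -> : x = (2^-1 : rat)%:MP * (x + x).
  have -> : x + x = (2%:R : rat)%:MP * x by rewrite mpolyC_nat mulr_natl mulr2n.
  by rewrite mulrA -mpolyCM e mpolyC1 mul1r.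
by rewrite h mulr0.
Qed.

Lemma antisym_sum m N (h : nat -> {mpoly rat[m]}) :
  (forall k, (k <= N)%N -> h (N - k)%N = - h k) -> \sum_(k < N.+1) h k = 0.
Proof.
move=> hh; apply: half_cancel.
rewrite [X in X + _](reindex_inj rev_ord_inj) /=.
rewrite -big_split big1 // => k _ /=; rewrite subSS hh ?addNr //.
by have := ltn_ord k; rewrite ltnS.
Qed.

Lemma zS (a b : nat) : ((a.+1)%:Z - (b.+1)%:Z = a%:Z - b%:Z)%R.
Proof. lia. Qed.

Definition aa n I : {mpoly rat[n.+2]} := sgen n.+2 ((n.+2)%:Z - (I.+1)%:Z) *+ I.+1.
Definition bb n J : {mpoly rat[n.+2]} :=
  sgen n.+2 ((n.+2)%:Z - J%:Z) - cc n * (sgen n.+2 ((n.+2)%:Z - J%:Z) *+ J).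

Lemma row0_PP n J : (J <= n.+1)%N -> PP n 0 J = aa n n.+1 * bb n J - bb n n.+1 * aa n J.
Proof.
move=> hJ.
pose h := fun k : nat => (((n.+2 + J)%N%:R - 2%:R * k%:R) * sgen n.+2 ((n.+2)%:Z - k%:Z)
   * sgen n.+2 (k%:Z - J%:Z) : {mpoly rat[n.+2]}).
have e1 : \sum_(k < n.+1) term n 0 k J = \sum_(k < n.+1) h k.
  apply: eq_bigr => k _; have hk := ltn_ord k.
  rewrite /term /x1 /x2 /x3 /x4 /h leq0n subn0.
  case: (leqP J k) => hJk.
    rewrite natrB; last lia.
    rewrite natrB // natrD; ring.
  rewrite (@sgen_neg _ (k%:Z - J%:Z)); last lia.
  ring.
have e2 : \sum_(k < (n.+2 + J).+1) h k = 0.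
  apply: antisym_sum => k hk; rewrite /h.
  have E1 : ((n.+2)%:Z - (n.+2 + J - k)%N%:Z = k%:Z - J%:Z)%R by lia.
  have E2 : ((n.+2 + J - k)%N%:Z - J%:Z = (n.+2)%:Z - k%:Z)%R by lia.
  rewrite E1 E2 natrB // natrD; ring.
have e3 : \sum_(k < (n.+2 + J).+1) h k = \sum_(k < n.+1) h k + h n.+1 + h n.+2.
  rewrite -!(big_mkord xpredT h) (big_cat_nat _ (n := n.+1)) //; last lia.
  rewrite -!addrA; congr (_ + _).
  rewrite big_ltn; last lia.
  rewrite big_ltn; last lia.
  rewrite /= [X in _ + (_ + X)]big_nat_cond big1 ?addr0 //.
  move=> k /andP[/andP[hk _] _]; rewrite /h (@sgen_neg _ ((n.+2)%:Z - k%:Z)) ?mulr0 ?mul0r //.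
  lia.
have e4 : \sum_(k < n.+1) h k = - (h n.+1 + h n.+2).
  by apply/eqP; rewrite -subr_eq0 opprK addrA -e3 e2.
rewrite /PP e1 e4 /h /uu /ww /aa /bb.
have E3 : ((n.+2)%:Z - (n.+1)%:Z = (1%N)%:Z)%R by lia.
rewrite E3. rewrite subrr. rewrite sgen0.
rewrite (zS n.+1 J).
rewrite (_ : (n.+2 - 1 = n.+1)%N) // (_ : (n.+2 - J.+1 = n.+1 - J)%N) // natrB //.
move: (sgen n.+2 (1%N)%:Z) (sgen n.+2 ((n.+1)%:Z - J%:Z)) (sgen n.+2 ((n.+2)%:Z - J%:Z)) => A B C.
move: (cc_r n); move: (cc n).
by apply: elim_cc => [x|]; cbv beta; ring.
Qed.

Lemma mulrnB' (R : nzRingType) (x : R) a b : (b <= a)%N -> x *+ (a - b) = x * (a%:R - b%:R).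
Proof. by move=> h; rewrite -natrB // mulr_natr. Qed.

Lemma caseA n I J : (I <= n)%N -> (J <= n)%N ->
  - term n (n - I) n J - cc n * (uu n (n - I).+1 * ww n J.+1 - uu n (n - I) * ww n J)
  = aa n I * bb n J.+1 - bb n I * aa n J.+1.
Proof.
move=> hI hJ.
rewrite /term /x1 /x2 /x3 /x4 /uu /ww /aa /bb leq_subr hJ (subKn hI) !zS.
rewrite (_ : (n.+2 - (n - I).+2 = I)%N); last lia.
rewrite (_ : (n.+2 - J.+2 = n - J)%N); last lia.
rewrite (_ : (n.+2 - (n - I).+1 = I.+1)%N); last lia.
rewrite (_ : (n.+2 - J.+1 = n.+1 - J)%N); last lia.
rewrite (_ : (n.+2 - (n - J) = J.+2)%N); last lia.
have -> : ((n - I).+2)%:Z = ((n.+2)%:Z - I%:Z :> int) by lia.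
have -> : ((n - I).+1)%:Z = ((n.+1)%:Z - I%:Z :> int) by lia.
rewrite !natrB //; last lia.
move: (sgen n.+2 ((n.+2)%:Z - I%:Z)) (sgen n.+2 (n%:Z - J%:Z)) => A B.
move: (sgen n.+2 ((n.+1)%:Z - I%:Z)) (sgen n.+2 ((n.+1)%:Z - J%:Z)) => C D.
move: (cc_r n); move: (cc n).
by apply: elim_cc => [x|]; cbv beta; ring.
Qed.

Lemma col0_PP n i : (i <= n)%N -> PP n i 0 = aa n (n.+1 - i) * bb n 0 - bb n (n.+1 - i) * aa n 0.
Proof.
move=> hi.
pose h := fun k : nat => (((n.+2 + i)%N%:R - 2%:R * k%:R) * sgen n.+2 ((n.+2 + i)%N%:Z - k%:Z)
   * sgen n.+2 k%:Z : {mpoly rat[n.+2]}).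
have e1 : \sum_(k < n.+1) term n i k 0 = \sum_(k < n.+1) h k.
  apply: eq_bigr => k _; have hk := ltn_ord k.
  rewrite /term /x1 /x2 /x3 /x4 /h leq0n subn0.
  rewrite (_ : k%:Z - (0%N)%:Z = k%:Z :> int); last lia.
  case: (leqP i k) => hik.
    rewrite (_ : (n.+2)%:Z - (k - i)%N%:Z = (n.+2 + i)%N%:Z - k%:Z :> int); last lia.
    rewrite !natrB // ?natrD; last lia.
    ring.
  rewrite (@sgen_big _ ((n.+2 + i)%N%:Z - k%:Z)); last lia.
  ring.
have e2 : \sum_(k < (n.+2 + i).+1) h k = 0.
  apply: antisym_sum => k hk; rewrite /h.
  have E1 : ((n.+2 + i)%N%:Z - (n.+2 + i - k)%N%:Z = k%:Z)%R by lia.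
  have E2 : ((n.+2 + i - k)%N%:Z = (n.+2 + i)%N%:Z - k%:Z)%R by lia.
  rewrite E1 E2 natrB //; ring.
have e3 : \sum_(k < (n.+2 + i).+1) h k = \sum_(k < n.+1) h k + h n.+1 + h n.+2.
  rewrite -!(big_mkord xpredT h) (big_cat_nat _ (n := n.+1)) //; last lia.
  rewrite -!addrA; congr (_ + _).
  rewrite big_ltn; last lia.
  rewrite big_ltn; last lia.
  rewrite /= [X in _ + (_ + X)]big_nat_cond big1 ?addr0 //.
  move=> k /andP[/andP[hk _] _]; rewrite /h (@sgen_big _ k%:Z) ?mulr0 ?mul0r //.
have e4 : \sum_(k < n.+1) h k = - (h n.+1 + h n.+2).
  by apply/eqP; rewrite -subr_eq0 opprK addrA -e3 e2.
rewrite /PP e1 e4 /h /uu /ww /aa /bb.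
rewrite (_ : (n.+2 + i)%N%:Z - (n.+1)%:Z = (i.+1)%:Z :> int); last lia.
rewrite (_ : (n.+2 + i)%N%:Z - (n.+2)%:Z = i%:Z :> int); last lia.
rewrite (_ : (n.+2)%:Z - (1%N)%:Z = (n.+1)%:Z :> int); last lia.
rewrite (_ : (n.+2)%:Z - ((n.+1 - i).+1)%:Z = i%:Z :> int); last lia.
rewrite (_ : (n.+2)%:Z - (0%N)%:Z = (n.+2)%:Z :> int); last lia.
rewrite (_ : (n.+2)%:Z - (n.+1 - i)%N%:Z = (i.+1)%:Z :> int); last lia.
rewrite (_ : (n.+2 - 1 = n.+1)%N) // (_ : ((n.+1 - i).+1 = n.+2 - i)%N); last lia.
rewrite !mulrnB' //; last lia.
rewrite ?natrB //.
move: (sgen n.+2 (i.+1)%:Z) (sgen n.+2 (n.+1)%:Z) (sgen n.+2 i%:Z) (sgen n.+2 (n.+2)%:Z) => A B C D.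
move: (cc_r n); move: (cc n).
by apply: elim_cc => [x|]; cbv beta; ring.
all: lia.
Qed.

Definition QQ n : {poly {poly {mpoly rat[n.+2]}}} :=
  \poly_(I < n.+1) \poly_(J < n.+1) PP n (n - I) J.

Lemma QQc n I J : ((QQ n)`_I)`_J = if (I < n.+1)%N then PP n (n - I) J else 0.
Proof.
rewrite /QQ coef_poly; case: ltnP => _; last by rewrite coef0.
rewrite coef_poly; case: ltnP => // hJ; by rewrite PP_col_big.
Qed.

Lemma aa_big n I : (n.+1 < I)%N -> aa n I = 0.
Proof. by move=> h; rewrite /aa sgen_neg ?mul0rn //; lia. Qed.

Lemma bb_big n I : (n.+1 < I)%N -> bb n I = 0.
Proof.
move=> h; rewrite /bb; case: (ltngtP I n.+2) => hI; first lia.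
  by rewrite sgen_neg ?mul0rn ?mulr0 ?subr0 //; lia.
rewrite hI subrr sgen0 -mulr_natr mul1r cc_r; exact: subrr.
Qed.

Lemma main_coef n I J :
  (if I is I'.+1 then ((QQ n)`_I')`_J else 0) - (if J is J'.+1 then ((QQ n)`_I)`_J' else 0)
  = aa n I * bb n J - bb n I * aa n J.
Proof.
case: (ltnP n.+1 I) => hIb.
  rewrite (@aa_big n I hIb) (@bb_big n I hIb) !mul0r subrr.
  case: I hIb => [|I] // hIb.
  case: J => [|J]; rewrite !QQc !ifF ?subrr //; apply/negbTE/negP; lia.
case: (ltnP n.+1 J) => hJb.
  rewrite (@aa_big n J hJb) (@bb_big n J hJb) !mulr0 subrr.
  case: J hJb => [|J] // hJb.
  have h1 : forall i, PP n i J.+1 = 0 by move=> i; apply: PP_col_big; lia.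
  have h2 : forall i, PP n i J = 0 by move=> i; apply: PP_col_big; lia.
  by case: I hIb => [|I] hIb; rewrite !QQc ?h1 ?h2 ?if_same ?subrr ?sub0r ?oppr0.
case: I hIb => [|I] hIb; case: J hJb => [|J] hJb.
- by rewrite subrr mulrC subrr.
- rewrite QQc /= subn0 sub0r.
  have := PP_disp n n J; rewrite PP_row_big // sub0r => ->.
  by have := @caseA n 0 J (leq0n n) hJb; rewrite subn0.
- rewrite QQc ifT // subr0.
  have := @col0_PP n (n - I) (leq_subr I n).
  by rewrite (_ : (n.+1 - (n - I) = I.+1)%N) //; lia.
- rewrite !QQc ifT //.
  case: (ltngtP I n) => hIn; [ | lia | ].
  + rewrite ifT //.
    have E : (n - I = (n - I.+1).+1)%N by lia.
    rewrite E PP_disp.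
    exact: (@caseA n I.+1 J hIn hJb).
  + by rewrite hIn ifF ?ltnn // subr0 subnn (@row0_PP n J.+1 hJb).
Qed.

Theorem proposition6 (r : nat) (hr : (2 <= r)%N) :
  - (X1 r *m X2 r) + X3 r *m X4 r
    - ((r%:R^-1 : rat)%:MP) *: (ucol r *m wrow r)
  = Janti _ (r.-1) *m bezout r.-1 (fgen r)^`() (ggen r).
Proof.
case: r hr => [|[|n]] // _.
have hQ : bezout_quot (fgen n.+2)^`() (ggen n.+2) = QQ n.
  apply: bezout_quotE; apply/polyP => I; apply/polyP => J.
  rewrite coef2_lin !coefB !coef2_prod !fder_coef !ggen_coef.
  exact: main_coef.
apply/matrixP => i j; have hi : (i < n.+1)%N := ltn_ord i.
rewrite lhs_entry !mxE.
rewrite (bigD1 (rev_ord i)) //= big1 ?addr0.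
  rewrite !mxE hQ QQc /=.
  rewrite (_ : (i + (n.+1 - i.+1))%N = n); last lia.
  rewrite eqxx mul1r ifT; last lia.
  by rewrite (_ : (n - (n.+1 - i.+1) = i)%N) //; lia.
move=> k hk; rewrite !mxE ifF ?mul0r //.
apply/negbTE/negP => /eqP h; move/eqP: hk; apply; apply: val_inj => /=.
lia.
Qed.
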